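(* Let $n\ge3$ and let $M^{2n-1}\subset U_n$ be the hypersurface consisting of non-degenerate $n$-gons with a fixed non-zero value of the area function $A$. Then at every point of $M$ the tangent space of $M$ is spanned by the vector fields tangent to the dual Birkhoff distribution $\mathcal F$ and their first commutators. Thus the bracket growth type of $\mathcal F$ on $M$ is $(n,2n-1)$.
   Context: $[\cdot,\cdot]$ is the determinant of two plane vectors; indices are cyclic. $G_n$ is the set of $n$-gons $(z_1,\dots,z_n)\in(\mathbb R^2)^n$ with $z_i\ne z_{i+1}$; $U_n\subset G_n$ is the open set of non-degenerate $n$-gons (no three consecutive vertices collinear). $A(z_1,\dots,z_n)=\sum_{i}[z_i,z_{i+1}]$ (twice the signed area). The dual Birkhoff distribution $\mathcal F$ on $G_n$: a tangent vector $W=(w_1,\dots,w_n)$ (velocities of the vertices) lies in $\mathcal F$ iff for each $i$ the induced motion of the line $z_iz_{i+1}$ is an infinitesimal rotation about the midpoint of $z_iz_{i+1}$; equivalently $[w_i+w_{i+1},z_{i+1}-z_i]=0$ for all $i$. $\mathcal F$ is $n$-dimensional and tangent to the level sets of $A$, hence defines a distribution on $M$. *)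

(* Defs.v *)
From HB Require Import structures.
From mathcomp Require Import all_boot all_order all_algebra.
From mathcomp Require Import all_classical all_reals all_analysis.
Set Implicit Arguments. Unset Strict Implicit. Unset Printing Implicit Defensive.
Import Order.TTheory GRing.Theory Num.Theory.
Import numFieldNormedType.Exports.
Local Open Scope classical_set_scope.
Local Open Scope ring_scope.

Section Polygons.
Variables (R : realType) (n : nat).

(* An n-gon (z_1,...,z_n) in (R^2)^n is an n x 2 matrix; row i is vertex z_i.
   Tangent vectors W = (w_1,...,w_n) live in the same space. *)
Definition ngon := 'M[R]_(n, 2).

Definition det2 (a b : 'rV[R]_2) : R := a 0 0 * b 0 1 - a 0 1 * b 0 0.

Definition vtx (z : ngon) (i : 'I_n) : 'rV[R]_2 := row i z.
Definition nxt (i : 'I_n) : 'I_n := ordS i.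

Definition G_n : set ngon := [set z | forall i, vtx z i <> vtx z (nxt i)].

Definition U_n : set ngon :=
  [set z | G_n z /\ forall i,
     det2 (vtx z (nxt i) - vtx z i) (vtx z (nxt (nxt i)) - vtx z (nxt i)) != 0].

Definition area (z : ngon) : R := \sum_(i < n) det2 (vtx z i) (vtx z (nxt i)).

Definition birkhoffF (z : ngon) : set ngon :=
  [set W | forall i, det2 (vtx W i + vtx W (nxt i)) (vtx z (nxt i) - vtx z i) = 0].

Definition Mhyp (c : R) : set ngon := [set z | U_n z /\ area z = c].

Definition tangentM (z : ngon) : set ngon := [set W | 'D_W area z = 0].

Definition iter_dir (vs : seq ngon) (X : ngon -> ngon) : ngon -> ngon :=
  foldr (fun v g => fun x => 'D_v g x) X vs.

Definition smooth_on (U : set ngon) (X : ngon -> ngon) : Prop :=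
  forall vs : seq ngon, forall x, U x -> differentiable (iter_dir vs X) x.

Definition F_field (c : R) (z : ngon) (X : ngon -> ngon) : Prop :=
  exists U : set ngon, [/\ open U, U z, smooth_on U X &
    forall y, U y -> Mhyp c y -> birkhoffF y (X y)].

Definition lie (X Y : ngon -> ngon) (z : ngon) : ngon :=
  'D_(X z) Y z - 'D_(Y z) X z.

Definition gen_set (c : R) (z : ngon) : set ngon :=
  [set v | (exists X, F_field c z X /\ v = X z) \/
           (exists X Y, [/\ F_field c z X, F_field c z Y & v = lie X Y z])].

Definition in_span (S : set ngon) (W : ngon) : Prop :=
  exists (k : nat) (a : 'I_k -> R) (v : 'I_k -> ngon),
    (forall j, S (v j)) /\ W = \sum_(j < k) a j *: v j.

End Polygons.

(* Main.v *)
Require Import Defs.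
From HB Require Import structures.
From mathcomp Require Import all_boot all_order all_algebra.
From mathcomp Require Import all_classical all_reals all_analysis.
From mathcomp Require Import ring lra zify.
Import Order.TTheory GRing.Theory Num.Theory.
Import numFieldNormedType.Exports.
Local Open Scope classical_set_scope.
Local Open Scope ring_scope.

Section Idx.
Context {n : nat}.
Hypothesis n3 : (3 <= n)%N.

Lemma nxt_val (i : 'I_n) : nat_of_ord (@nxt n i) = if i.+1 == n then 0%N else i.+1.
Proof.
rewrite /nxt /ordS /=; case: eqP => [->|h]; first by rewrite modnn.
by rewrite modn_small //; have := ltn_ord i; lia.
Qed.

Definition prv (i : 'I_n) : 'I_n := ord_pred i.
Lemma nxtK (i : 'I_n) : prv (nxt i) = i. Proof. exact: ordSK. Qed.
Lemma prvK (i : 'I_n) : nxt (prv i) = i. Proof. exact: ord_predK. Qed.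

Lemma nxt_neq (i : 'I_n) : nxt i != i.
Proof. apply/eqP => /(congr1 (@nat_of_ord n)); rewrite nxt_val; have := ltn_ord i; case: eqP; lia. Qed.

Lemma nxt2_neq (i : 'I_n) : nxt (nxt i) != i.
Proof.
apply/eqP => /(congr1 (@nat_of_ord n)); rewrite (nxt_val (nxt i)) (nxt_val i).
have := ltn_ord i; case: (i.+1 =P n) => h1 /=.
  by case: (1%N =P n) => /=; lia.
by case: (i.+2 =P n) => /=; lia.
Qed.
Lemma prv_val (i : 'I_n) : nat_of_ord (prv i) = if nat_of_ord i == 0%N then n.-1 else (nat_of_ord i).-1.
Proof.
rewrite /prv /ord_pred /=; have := ltn_ord i; case: eqP => [->|h] hi.
  by rewrite add0n modn_small //; lia.
have -> : (i + n).-1 = (i.-1 + n)%N by lia.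
by rewrite modnDr modn_small //; lia.
Qed.

Lemma nxt_inj : injective (@nxt n). Proof. exact: (can_inj nxtK). Qed.
Lemma sum_nxt (V : nmodType) (F : 'I_n -> V) : \sum_i F (nxt i) = \sum_i F i.
Proof. by rewrite [RHS](reindex_inj nxt_inj). Qed.
End Idx.

Section Alg.
Variables (R : realType) (n : nat).
Hypothesis n3 : (3 <= n)%N.
Local Notation ngon := (ngon R n).
Local Notation nxt := (@nxt n).
Local Notation prv := (@prv n).

Definition theta (i : 'I_n) (p w : ngon) : R :=
  det2 (vtx w i + vtx w (nxt i)) (vtx p (nxt i) - vtx p i).

Lemma thetaE i p w : theta i p w =
  (w i 0 + w (nxt i) 0) * (p (nxt i) 1 - p i 1) -
  (w i 1 + w (nxt i) 1) * (p (nxt i) 0 - p i 0).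
Proof. by rewrite /theta /det2 /vtx !mxE. Qed.

Definition Lb (p w : ngon) : R :=
  \sum_i (det2 (vtx p i) (vtx w (nxt i)) + det2 (vtx w i) (vtx p (nxt i))).

Lemma sum_theta p w : \sum_i theta i p w = Lb p w.
Proof.
pose G j := det2 (vtx w j) (vtx p j).
have -> : \sum_i theta i p w = Lb p w + (\sum_i G (nxt i) - \sum_i G i).
  rewrite /Lb -sumrB -big_split; apply: eq_bigr => i _ /=.
  rewrite /theta /G /det2 /vtx !mxE; ring.
by rewrite sum_nxt subrr addr0.
Qed.

Lemma Lb_sym p w : Lb p w = Lb w p.
Proof. by apply: eq_bigr => i _; rewrite addrC. Qed.

Lemma area2 p : Lb p p = 2 * area p.
Proof.
rewrite /Lb /area mulr_sumr; apply: eq_bigr => i _; rewrite /det2 /vtx !mxE; ring.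
Qed.

Lemma area_expand (z x u : ngon) t s :
  area (z + t *: x + s *: u) = area z + t * Lb z x + s * Lb z u + t ^+ 2 * area x
    + t * s * Lb x u + s ^+ 2 * area u.
Proof.
rewrite /area /Lb !mulr_sumr -!big_split; apply: eq_bigr => i _ /=.
rewrite /det2 /vtx !mxE; ring.
Qed.

Lemma lin_sum (f : ngon -> R) :
  (forall a v w, f (a *: v + w) = a * f v + f w) ->
  forall k (a : 'I_k -> R) (v : 'I_k -> ngon),
  f (\sum_j a j *: v j) = \sum_j a j * f (v j).
Proof.
move=> hf k a v; have f0 : f 0 = 0.
  by have := hf (-1) 0 0; rewrite scaler0 addr0 mulN1r addNr.
apply: (big_rec2 (fun s t => f s = t)) => [//|j y1 y2 _ <-].
by rewrite hf.
Qed.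

Lemma Lb_lin p k (a : 'I_k -> R) (v : 'I_k -> ngon) :
  Lb p (\sum_j a j *: v j) = \sum_j a j * Lb p (v j).
Proof.
apply: lin_sum => b x y; rewrite /Lb mulr_sumr -big_split; apply: eq_bigr => i _ /=.
rewrite /det2 /vtx !mxE; ring.
Qed.

Lemma theta_lin i p k (a : 'I_k -> R) (v : 'I_k -> ngon) :
  theta i p (\sum_j a j *: v j) = \sum_j a j * theta i p (v j).
Proof.
apply: lin_sum => b x y; rewrite !thetaE !mxE; ring.
Qed.

Definition ed (p : ngon) (k : 'I_n) (c : 'I_2) : R := p (nxt k) c - p k c.
Definition al (p : ngon) (k : 'I_n) : R :=
  ed p k 0 * ed p (nxt k) 1 - ed p k 1 * ed p (nxt k) 0.

Definition Xf (j : 'I_n) (p : ngon) : ngon :=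
  \matrix_(i, c) (if i == j then al p j * ed p (prv j) c
                  else if i == nxt j then al p (prv j) * ed p (nxt j) c else 0).

Lemma XfE j p i c : Xf j p i c = if i == j then al p j * ed p (prv j) c
                  else if i == nxt j then al p (prv j) * ed p (nxt j) c else 0.
Proof. by rewrite mxE. Qed.

Lemma nxt_neq' (j : 'I_n) : (j == nxt j) = false.
Proof. by apply/negbTE; rewrite eq_sym (nxt_neq n3). Qed.
Lemma nxt_neq'' (j : 'I_n) : (nxt j == j) = false.
Proof. by apply/negbTE; rewrite (nxt_neq n3). Qed.
Lemma nxt2_neq' (j : 'I_n) : (j == nxt (nxt j)) = false.
Proof. by apply/negbTE; rewrite eq_sym (nxt2_neq n3). Qed.
Lemma nxt2_neq'' (j : 'I_n) : (nxt (nxt j) == j) = false.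
Proof. by apply/negbTE; rewrite (nxt2_neq n3). Qed.
Lemma nxt_eq (i j : 'I_n) : (nxt i == nxt j) = (i == j).
Proof. exact: (inj_eq nxt_inj). Qed.

Lemma XfF j p : birkhoffF p (Xf j p).
Proof.
move=> i; rewrite -/(theta i p _) thetaE !XfE.
have [->|nij] := eqVneq i j.
  rewrite ?nxt_neq'' ?nxt_neq' ?eqxx /al /ed prvK; ring.
have [hj|nj] := eqVneq (nxt i) j.
  subst j; rewrite ?eqxx ?nxt2_neq' ?(negbTE nij) /al /ed nxtK; ring.
have [hi|ni] := eqVneq i (nxt j).
  subst i; rewrite ?nxt_eq ?nxt_neq'' ?eqxx ?(negbTE nj) /al /ed; ring.
rewrite ?nxt_eq ?(negbTE nij) ?(negbTE nj) ?(negbTE ni); ring.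
Qed.

Lemma prv_neq (a : 'I_n) : (a == prv a) = false.
Proof. by apply/negbTE; rewrite -{1}(prvK a) (nxt_neq n3). Qed.

Definition cf (z W : ngon) (j : 'I_n) : R :=
  (W j 0 * ed z j 1 - W j 1 * ed z j 0) / (al z (prv j) * al z j).

Lemma kernel z W : (forall k, al z k != 0) -> (forall i, theta i z W = 0) ->
  W = \sum_j cf z W j *: Xf j z.
Proof.
move=> nd hW; apply/matrixP => a c; rewrite summxE.
under eq_bigr => j _ do rewrite mxE XfE.
rewrite (bigD1 a) //= eqxx (bigD1 (prv a)); last by rewrite eq_sym prv_neq.
rewrite /= prv_neq prvK eqxx.
rewrite big1 ?addr0; last first.
  move=> j /andP[ja jpa]; rewrite eq_sym (negbTE ja).
  case: eqP => [haj|]; last by rewrite mulr0.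
  by move: jpa; rewrite haj nxtK eqxx.
have hc := hW (prv a); rewrite thetaE prvK in hc.
have al_pa : al z (prv a) = ed z (prv a) 0 * ed z a 1 - ed z (prv a) 1 * ed z a 0.
  by rewrite /al prvK.
have h2 : W (prv a) 0 * ed z (prv a) 1 - W (prv a) 1 * ed z (prv a) 0 =
    - (W a 0 * ed z (prv a) 1 - W a 1 * ed z (prv a) 0).
  rewrite /ed prvK; rewrite -[RHS]addr0 -hc; ring.
have hcase : forall (f : 'I_2 -> R), f c = if c == 0 then f 0 else f 1.
  by move=> f; case: c => [[|[|//]]] ci /=; congr f; exact: val_inj.
rewrite (hcase (fun c => W a c)) (hcase (ed z (prv a))) (hcase (ed z a)).
rewrite /cf h2 al_pa.
have n1 := nd a; have n2 := nd (prv a); have n3' := nd (prv (prv a)).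
move: n2; rewrite al_pa => n2.
move: n1 n2 n3'.
move: (al z a) (al z (prv (prv a))) (ed z (prv a) 0) (ed z (prv a) 1) (ed z a 0) (ed z a 1) (W a 0) (W a 1) => A1 A3 E0 E1 F0 F1 W0 W1 n1 n2 n3'.
case: eqP => _; field; by rewrite ?n1 ?n2 ?n3'.
Qed.
Arguments kernel {z W}.

Definition sg (x y : ngon) (k : 'I_n) : R := x k 0 * y k 1 - x k 1 * y k 0.

Lemma theta_swap i x y :
  - theta i x y + theta i y x = 2 * (sg x y (nxt i) - sg x y i).
Proof. rewrite !thetaE /sg; ring. Qed.

Definition sj (z : ngon) (j : 'I_n) : R :=
  al z (prv j) * al z (nxt j) * (ed z (nxt j) 0 * ed z j 1 - ed z (nxt j) 1 * ed z j 0).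

Lemma sg_XX j z k : sg (Xf j z) (Xf (nxt j) z) k = if k == nxt j then sj z j else 0.
Proof.
rewrite /sg !XfE nxtK.
have [->|nk] := eqVneq k (nxt j).
  by rewrite ?nxt_neq'' ?eqxx /sj; ring.
have [->|nkj] := eqVneq k j.
  by rewrite ?nxt_neq' ?nxt2_neq'; ring.
by rewrite ?(negbTE nk) ?(negbTE nkj); ring.
Qed.

Lemma eq_nxt_prv (i j : 'I_n) : (i == nxt j) = (prv i == j).
Proof. by apply/eqP/eqP => [->|<-]; rewrite ?nxtK ?prvK. Qed.

Lemma swapX j i z :
  - theta i (Xf j z) (Xf (nxt j) z) + theta i (Xf (nxt j) z) (Xf j z) =
  2 * sj z j * ((i == j)%:R - (i == nxt j)%:R).
Proof.
rewrite theta_swap !sg_XX nxt_eq.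
by case: (i == j); case: (i == nxt j); rewrite /=; ring.
Qed.

Lemma solve_b (lam s : 'I_n -> R) : (forall j, s j != 0) -> \sum_i lam i = 0 ->
  exists b : 'I_n -> R, forall i,
    \sum_j b j * (2 * s j * ((i == j)%:R - (i == nxt j)%:R)) = lam i.
Proof.
move=> sn0 hsum.
pose mu (j : 'I_n) := \sum_(k < n | (k <= j)%N) lam k.
exists (fun j => mu j / (2 * s j)) => i.
have h2 : (2 : R) != 0 by rewrite pnatr_eq0.
transitivity (\sum_j mu j * (i == j)%:R - \sum_j mu j * (i == nxt j)%:R).
  rewrite -sumrB; apply: eq_bigr => j _.
  have := sn0 j; move: (s j) (mu j) => S M sn.
  by field.
rewrite (bigD1 i) //= eqxx mulr1 big1 ?addr0; last first.
  by move=> j ji; rewrite eq_sym (negbTE ji) mulr0.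
rewrite (bigD1 (prv i)) //= eq_nxt_prv eqxx mulr1 big1 ?addr0; last first.
  by move=> j ji; rewrite eq_nxt_prv eq_sym (negbTE ji) mulr0.
rewrite /mu; case: (eqVneq (nat_of_ord i) 0%N) => hi.
  rewrite [X in _ - X](eq_bigl predT); last first.
    by move=> k; rewrite (prv_val n3) hi /=; have := ltn_ord k; lia.
  rewrite hsum subr0 (big_pred1 i) // => k; rewrite hi /=.
  apply/idP/eqP => [hk|->]; last by rewrite hi.
  by apply: val_inj => /=; lia.
rewrite (bigD1 i) //= (eq_bigl (fun k : 'I_n => (k <= prv i)%N)) ?addrK // => k.
rewrite (prv_val n3) (negbTE hi).
apply/idP/idP => [/andP[h1 h2']|h1].
  by have : nat_of_ord k != nat_of_ord i by []; lia.
apply/andP; split; first by lia.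
by apply/eqP => /(congr1 (@nat_of_ord n)) /=; lia.
Qed.
Arguments solve_b {lam s}.


Lemma Dcoord (z x : ngon) a b :
  derivable (fun p : ngon => p a b) z x /\ 'D_x (fun p : ngon => p a b) z = x a b.
Proof.
have hid := @derivable_id R ngon z x.
have := derive_mx hid; rewrite derive_id => /matrixP /(_ a b); rewrite mxE => ->.
split => //; by move/derivable_mxP: hid => /(_ a b).
Qed.

Lemma Dentry (Y : ngon -> ngon) (z x : ngon) a b : derivable Y z x ->
  derivable (fun p => Y p a b) z x /\ 'D_x (fun p => Y p a b) z = 'D_x Y z a b.
Proof.
move=> hY; split; first by move/derivable_mxP: hY => /(_ a b).
by rewrite (derive_mx hY) mxE.
Qed.

Lemma DM {V : normedModType R} (f g : V -> R) (z x : V) : derivable f z x -> derivable g z x ->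
  derivable (fun p => f p * g p) z x /\
  'D_x (fun p => f p * g p) z = 'D_x f z * g z + f z * 'D_x g z.
Proof.
move=> hf hg; split; first exact: (derivableM hf hg).
have := deriveM hf hg; rewrite /= => ->; rewrite /GRing.scale /=; ring.
Qed.

Lemma DD {V : normedModType R} (f g : V -> R) (z x : V) : derivable f z x -> derivable g z x ->
  derivable (fun p => f p + g p) z x /\
  'D_x (fun p => f p + g p) z = 'D_x f z + 'D_x g z.
Proof.
move=> hf hg; split; first exact: (derivableD hf hg).
exact: (deriveD hf hg).
Qed.

Lemma DB {V : normedModType R} (f g : V -> R) (z x : V) : derivable f z x -> derivable g z x ->
  derivable (fun p => f p - g p) z x /\
  'D_x (fun p => f p - g p) z = 'D_x f z - 'D_x g z.
Proof.
move=> hf hg; split; first exact: (derivableB hf hg).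
exact: (deriveB hf hg).
Qed.

Arguments DD {V f g z x}. Arguments DM {V f g z x}. Arguments DB {V f g z x}. Arguments Dentry {Y z x}.

Inductive pf : (ngon -> R) -> Prop :=
| pf_cst c : pf (fun _ => c)
| pf_coord a b : pf (fun p => p a b)
| pf_add f g : pf f -> pf g -> pf (fun p => f p + g p)
| pf_mul f g : pf f -> pf g -> pf (fun p => f p * g p).
Arguments pf_add {f g}. Arguments pf_mul {f g}.

Lemma pf_ext f g : pf f -> (forall p, f p = g p) -> pf g.
Proof. by move=> hf e; have <- : f = g by apply/funext. Qed.
Arguments pf_ext {f g}.

Lemma pf_sub f g : pf f -> pf g -> pf (fun p => f p - g p).
Proof.
move=> hf hg; apply: (pf_ext (pf_add hf (pf_mul (pf_cst (-1)) hg))) => p; ring.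
Qed.

Arguments pf_sub {f g}.

Lemma pf_diff f : pf f -> forall z, differentiable f z.
Proof.
elim=> [c|a b|f' g _ hf _ hg|f' g _ hf _ hg] z.
- exact: differentiable_cst.
- exact: differentiable_coord.
- exact: differentiableD.
- exact: differentiableM.
Qed.
Arguments pf_diff {f}.

Lemma pf_der f : pf f -> forall x, pf (fun z => 'D_x f z).
Proof.
elim=> [c|a b|f' g hf' hf hg' hg|f' g hf' hf hg' hg] x.
- by apply: (pf_ext (pf_cst 0)) => z; rewrite derive_cst.
- by apply: (pf_ext (pf_cst (x a b))) => z; rewrite (Dcoord z x a b).2.
- apply: (pf_ext (pf_add (hf x) (hg x))) => z.
  by rewrite (DD (diff_derivable (pf_diff hf' z)) (diff_derivable (pf_diff hg' z))).2.
- apply: (pf_ext (pf_add (pf_mul (hf x) hg') (pf_mul hf' (hg x)))) => z.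
  by rewrite (DM (diff_derivable (pf_diff hf' z)) (diff_derivable (pf_diff hg' z))).2.
Qed.
Arguments pf_der {f}.

Definition pfield (X : ngon -> ngon) := forall a b, pf (fun p => X p a b).

Lemma pfield_diff X : pfield X -> forall z, differentiable X z.
Proof.
move=> hX z.
have -> : X = \sum_(a < n) (fun p => \sum_(b < 2) X p a b *: delta_mx a b).
  apply/funext => p; rewrite fct_sumE; apply/matrixP => a b.
  rewrite summxE; under eq_bigr do rewrite summxE.
  rewrite (bigD1 a) //= (bigD1 b) //= !mxE !eqxx mulr1 big1 ?addr0; last first.
    by move=> b' hb; rewrite !mxE eqxx eq_sym (negbTE hb) mulr0.
  rewrite big1 ?addr0 // => a' ha; rewrite big1 // => b' _.
  by rewrite !mxE eq_sym (negbTE ha) mulr0.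
apply: differentiable_sum => a.
have -> : (fun p => \sum_(b < 2) X p a b *: delta_mx a b) =
  \sum_(b < 2) (fun p => X p a b *: (delta_mx a b : ngon)).
  by rewrite fct_sumE.
apply: differentiable_sum => b.
exact/differentiableZl/pf_diff.
Qed.
Arguments pfield_diff {X}.

Lemma pfield_der X : pfield X -> forall v, pfield (fun x => 'D_v X x).
Proof.
move=> hX v a b; apply: (pf_ext (pf_der (hX a b) v)) => z.
by rewrite (Dentry a b (diff_derivable (pfield_diff hX z))).2.
Qed.

Lemma pfield_smooth X U : pfield X -> smooth_on U X.
Proof.
move=> hX vs x _; apply: pfield_diff.
elim: vs => [//|v vs IH] /=; exact: pfield_der.
Qed.

Lemma DT (Y : ngon -> ngon) (z x : ngon) i : derivable Y z x ->
  derivable (fun p => theta i p (Y p)) z x /\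
  'D_x (fun p => theta i p (Y p)) z = theta i x (Y z) + theta i z ('D_x Y z).
Proof.
move=> hY.
have h1 := DD (Dentry i 0 hY).1 (Dentry (nxt i) 0 hY).1.
have h2 := DB (Dcoord z x (nxt i) 1).1 (Dcoord z x i 1).1.
have h3 := DM h1.1 h2.1.
have h4 := DD (Dentry i 1 hY).1 (Dentry (nxt i) 1 hY).1.
have h5 := DB (Dcoord z x (nxt i) 0).1 (Dcoord z x i 0).1.
have h6 := DM h4.1 h5.1.
have h7 := DB h3.1 h6.1.
have -> : (fun p => theta i p (Y p)) = (fun p =>
    (Y p i 0 + Y p (nxt i) 0) * (p (nxt i) 1 - p i 1) -
    (Y p i 1 + Y p (nxt i) 1) * (p (nxt i) 0 - p i 0)).
  by apply/funext => p; rewrite thetaE.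
split; first exact: h7.1.
rewrite h7.2 h3.2 h6.2 h1.2 h2.2 h4.2 h5.2 !(Dentry _ _ hY).2 !(Dcoord z x _ _).2.
rewrite !thetaE; ring.
Qed.


Lemma DDg {V W : normedModType R} (f g : V -> W) (z x : V) :
  derivable f z x -> derivable g z x ->
  derivable (fun p => f p + g p) z x /\ 'D_x (fun p => f p + g p) z = 'D_x f z + 'D_x g z.
Proof. move=> hf hg; split; [exact: derivableD | exact: deriveD]. Qed.
Arguments DDg {V W f g z x}.

Lemma DZl (k : R -> R) (f : ngon) (t : R) : derivable k t 1 ->
  differentiable (fun s => k s *: f) t /\ 'D_1 (fun s => k s *: f) t = 'D_1 k t *: f.
Proof.
move=> hk; have dk : differentiable k t by apply/derivable1_diffP.
have dZ := differentiableZl f dk.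
by split => //; rewrite deriveE // diffZl // -deriveE.
Qed.
Arguments DZl {k} f {t}.

Lemma curve0 (g : ngon -> R) (z x : ngon) (ga : R -> ngon) :
  differentiable g z -> ga 0 = z -> differentiable ga 0 -> 'D_1 ga 0 = x ->
  (\forall t \near 0, g (ga t) = 0) -> 'D_x g z = 0.
Proof.
move=> dg g0 dga hx hn.
have dg' : differentiable g (ga 0) by rewrite g0.
have dc : differentiable (g \o ga) 0 := differentiable_comp dga dg'.
have e1 : 'D_1 (g \o ga) 0 = 0.
  rewrite (@near_eq_derive _ _ _ _ (cst 0)); first exact: derive_cst.
  by move: hn; apply: filterS => t /= ->.
rewrite deriveE // -hx (deriveE (1 : R) dga) -g0.
by rewrite -[RHS]e1 (deriveE (1 : R) dc) (diff_comp dga dg').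
Qed.


Lemma curve_exists (z x u : ngon) (a q r : R) : q != 0 ->
  let phi := fun t : R => t * t * a * (q + t * r)^-1 in
  let ga := fun t : R => z + t *: x + phi t *: u in
  [/\ ga 0 = z, differentiable ga 0, 'D_1 ga 0 = x &
      \forall t \near 0, q + t * r != 0].
Proof.
move=> hq phi ga.
have hid : derivable (fun t : R => t) 0 1 by exact: derivable_id.
have hA := DM (DM hid hid).1 (derivable_cst a (0:R) (1:R)).
have hL := DD (derivable_cst q (0:R) (1:R)) (DM hid (derivable_cst r (0:R) (1:R))).1.
have hL0 : q + 0 * r != 0 by rewrite mul0r addr0.
have hB := derivableV (f := fun t : R => q + t * r) hL0 hL.1.
have hphi := DM hA.1 hB.
have dphi : 'D_1 phi 0 = 0.
  rewrite /phi hphi.2 hA.2 (DM hid hid).2 derive_id !derive_cst; ring.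
have hx1 := DZl x hid.
have hu1 := DZl u hphi.1.
have hs := DDg (DDg (derivable_cst z (0:R) (1:R)) (diff_derivable hx1.1)).1 (diff_derivable hu1.1).
split.
- by rewrite /ga /phi !mul0r !scale0r !addr0.
- apply: differentiableD; last exact: hu1.1.
  by apply: differentiableD; [exact: differentiable_cst | exact: hx1.1].
- rewrite /ga hs.2 (DDg (derivable_cst z (0:R) (1:R)) (diff_derivable hx1.1)).2 hx1.2 hu1.2.
  by rewrite /phi dphi derive_cst derive_id scale0r scale1r add0r addr0.
- have dL : differentiable (fun t : R => q + t * r) 0.
    by apply/derivable1_diffP; exact: hL.1.
  have hc := differentiable_continuous dL.
  have H := cvgr_neq0 (q + 0 * r) hc hL0.
  exact: H.
Qed.


Lemma pf_ed k c : pf (fun p => ed p k c).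
Proof. exact: (pf_sub (pf_coord (nxt k) c) (pf_coord k c)). Qed.

Lemma pf_al k : pf (fun p => al p k).
Proof.
exact: (pf_sub (pf_mul (pf_ed k 0) (pf_ed (nxt k) 1)) (pf_mul (pf_ed k 1) (pf_ed (nxt k) 0))).
Qed.

Lemma pfield_Xf j : pfield (Xf j).
Proof.
move=> a b.
apply: (pf_ext (f := fun p => if a == j then al p j * ed p (prv j) b
                  else if a == nxt j then al p (prv j) * ed p (nxt j) b else 0));
  last by move=> p; rewrite XfE.
case: (a == j); first exact: (pf_mul (pf_al j) (pf_ed _ b)).
case: (a == nxt j); first exact: (pf_mul (pf_al _) (pf_ed _ b)).
exact: pf_cst.
Qed.

Lemma alE (p : ngon) i : det2 (vtx p (nxt i) - vtx p i) (vtx p (nxt (nxt i)) - vtx p (nxt i)) = al p i.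
Proof. by rewrite /det2 /vtx /al /ed !mxE. Qed.

Lemma Un_near (z : ngon) : U_n z -> \forall p \near z, U_n p.
Proof.
move=> [hG hD].
have h1 : forall i, \forall p \near z, al p i != 0.
  move=> i; have cont := differentiable_continuous (pf_diff (pf_al i) z).
  by apply: (cvgr_neq0 (al z i) cont); rewrite -alE.
have h2 : forall i, \forall p \near z, vtx p i != vtx p (nxt i).
  move=> i.
  have [c hc] : exists c, z i c - z (nxt i) c != 0.
    case: (pselect (exists c, z i c - z (nxt i) c != 0)) => // hn; exfalso.
    apply: (hG i); apply/rowP => c; rewrite !mxE; apply/eqP; rewrite -subr_eq0.
    by case: (eqVneq (z i c - z (nxt i) c) 0) => // h; exfalso; apply: hn; exists c.
  have cont := differentiable_continuous
    (pf_diff (pf_sub (pf_coord i c) (pf_coord (nxt i) c)) z).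
  have H := cvgr_neq0 (z i c - z (nxt i) c) cont hc.
  near=> p; apply/eqP => /rowP /(_ c); rewrite !mxE => e.
  have hp : p i c - p (nxt i) c != 0 by near: p; exact: H.
  by move: hp; rewrite e subrr eqxx.
have H1 := filter_forall _ h1; have H2 := filter_forall _ h2.
near=> p.
have Hp2 : forall i, vtx p i != vtx p (nxt i) by near: p; exact: H2.
have Hp1 : forall i, al p i != 0 by near: p; exact: H1.
split; first by move=> i; apply/eqP.
by move=> i; rewrite alE.
Unshelve. all: by end_near.
Qed.
Arguments Un_near {z}.

Definition uk (z : ngon) (k : 'I_n) : ngon := \matrix_(i, c) (if i == k then z k c else 0).

Lemma area_uk (z : ngon) k : area (uk z k) = 0.
Proof.
rewrite /area big1 // => i _; rewrite /det2 /vtx !mxE.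
have [->|nik] := eqVneq i k; first by rewrite nxt_neq''; ring.
by rewrite ?(negbTE nik); ring.
Qed.

Lemma sum_uk (z : ngon) : \sum_k 1 *: uk z k = z.
Proof.
apply/matrixP => i c; rewrite summxE (bigD1 i) //= !mxE eqxx mul1r.
rewrite big1 ?addr0 // => k hk; rewrite !mxE eq_sym (negbTE hk); ring.
Qed.

Lemma pick_u (z : ngon) : area z != 0 -> exists u, area u = 0 /\ Lb z u != 0.
Proof.
move=> hz; case: (pselect (exists k, Lb z (uk z k) != 0)) => [[k hk]|hn].
  by exists (uk z k); split => //; exact: area_uk.
have hk : forall k, Lb z (uk z k) = 0.
  by move=> k; case: (eqVneq (Lb z (uk z k)) 0) => // h; exfalso; apply: hn; exists k.
have : Lb z z = 0.
  by rewrite -{2}(sum_uk z) Lb_lin big1 // => k _; rewrite hk mulr0.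
rewrite area2 => /eqP; rewrite mulf_eq0 pnatr_eq0 /= => /eqP h.
by move: hz; rewrite h eqxx.
Qed.


Lemma dentry (Y : ngon -> ngon) (z : ngon) a b :
  differentiable Y z -> differentiable (fun p => Y p a b) z.
Proof. move=> dY; exact: (differentiable_comp dY (differentiable_coord (Y z) a b)). Qed.

Lemma gdiff (Y : ngon -> ngon) (z : ngon) : differentiable Y z ->
  differentiable (fun p => \sum_i theta i p (Y p)) z.
Proof.
move=> dY.
have -> : (fun p => \sum_i theta i p (Y p)) = \sum_i (fun p => theta i p (Y p)).
  by rewrite fct_sumE.
apply: differentiable_sum => i.
have -> : (fun p => theta i p (Y p)) = (fun p =>
    (Y p i 0 + Y p (nxt i) 0) * (p (nxt i) 1 - p i 1) -
    (Y p i 1 + Y p (nxt i) 1) * (p (nxt i) 0 - p i 0)).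
  by apply/funext => p; rewrite thetaE.
apply: differentiableB; apply: differentiableM.
- by apply: differentiableD; apply: dentry.
- by apply: differentiableB; apply: differentiable_coord.
- by apply: differentiableD; apply: dentry.
- by apply: differentiableB; apply: differentiable_coord.
Qed.

Lemma Dg (Y : ngon -> ngon) (z x : ngon) : differentiable Y z ->
  'D_x (fun p => \sum_i theta i p (Y p)) z =
  \sum_i (theta i x (Y z) + theta i z ('D_x Y z)).
Proof.
move=> dY; have hY := diff_derivable (v := x) dY.
have -> : (fun p => \sum_i theta i p (Y p)) = \sum_i (fun p => theta i p (Y p)).
  by rewrite fct_sumE.
rewrite derive_sum; last by move=> i; exact: (DT _ _ _ i hY).1.
by apply: eq_bigr => i _; rewrite (DT _ _ _ i hY).2.
Qed.

Lemma vanish c (z : ngon) Y x : c != 0 -> Mhyp c z -> F_field c z Y -> Lb z x = 0 ->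
  'D_x (fun p => \sum_i theta i p (Y p)) z = 0.
Proof.
move=> hc [hUn hA] [U [oU Uz sY hY]] hx.
have dY : differentiable Y z := sY [::] z Uz.
have [u [au qu]] : exists u, area u = 0 /\ Lb z u != 0 by apply: pick_u; rewrite hA.
have [g0 dga Dga hnear] := curve_exists z x u (- area x) (Lb z u) (Lb x u) qu.
pose ga := fun t : R => z + t *: x + (t * t * - area x / (Lb z u + t * Lb x u)) *: u.
apply: (@curve0 _ z x ga (gdiff _ _ dY) g0 dga Dga).
have hUz : \forall p \near z, U p /\ U_n p.
  have nU : nbhs z U by apply: open_nbhs_nbhs; split.
  have nUn := Un_near hUn.
  near=> p; split; [near: p; exact: nU | near: p; exact: nUn].
have cont : ga @ 0 --> z.
  have h := differentiable_continuous dga; have e : ga 0 = z := g0.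
  by rewrite -e.
have hga := cont _ hUz.
near=> t.
have [HU HUn] : U (z + t *: x + (t * t * - area x / (Lb z u + t * Lb x u)) *: u) /\
   U_n (z + t *: x + (t * t * - area x / (Lb z u + t * Lb x u)) *: u).
  by near: t; exact: hga.
have Hq : Lb z u + t * Lb x u != 0 by near: t; exact: hnear.
have HM : Mhyp c (z + t *: x + (t * t * - area x / (Lb z u + t * Lb x u)) *: u).
  split => //; rewrite area_expand hA hx au.
  move: Hq; move: (Lb z u) (Lb x u) (area x) => Q Rr A Hq; field.
  exact: Hq.
have hb := hY _ HU HM.
rewrite /= big1 // => i _; exact: hb i.
Unshelve. all: by end_near.
Qed.
Arguments vanish {c z Y x}.

Lemma theta_sub i (z a b : ngon) : theta i z (a - b) = theta i z a - theta i z b.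
Proof. rewrite !thetaE !mxE; ring. Qed.

Lemma FF_tangent c (z : ngon) X : Mhyp c z -> F_field c z X -> Lb z (X z) = 0.
Proof.
move=> hM [U [_ Uz _ hX]]; have hb := hX z Uz hM.
by rewrite -sum_theta big1 // => i _; exact: hb i.
Qed.
Arguments FF_tangent {c z X}.

Lemma bracket_tangent c (z : ngon) X Y : c != 0 -> Mhyp c z -> F_field c z X ->
  F_field c z Y -> Lb z (lie X Y z) = 0.
Proof.
move=> hc hM hFX hFY.
have dX : differentiable X z by case: hFX => U [_ Uz sX _]; exact: sX [::] z Uz.
have dY : differentiable Y z by case: hFY => U [_ Uz sY _]; exact: sY [::] z Uz.
have e1 := vanish hc hM hFY (FF_tangent hM hFX).
have e2 := vanish hc hM hFX (FF_tangent hM hFY).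
rewrite (Dg _ _ _ dY) big_split /= sum_theta in e1.
rewrite (Dg _ _ _ dX) big_split /= sum_theta in e2.
rewrite /lie -sum_theta.
under eq_bigr => i _ do rewrite theta_sub.
rewrite sumrB.
have -> : \sum_i theta i z ('D_(X z) Y z) = - Lb (X z) (Y z).
  by apply/eqP; rewrite -addr_eq0 addrC e1.
have -> : \sum_i theta i z ('D_(Y z) X z) = - Lb (Y z) (X z).
  by apply/eqP; rewrite -addr_eq0 addrC e2.
by rewrite Lb_sym opprK addNr.
Qed.
Arguments bracket_tangent {c z X Y}.

Lemma DA (z W : ngon) : 'D_W (@area R n) z = Lb z W.
Proof.
have hterm : forall i, derivable (fun p : ngon => p i 0 * p (nxt i) 1 - p i 1 * p (nxt i) 0) z W /\
   'D_W (fun p : ngon => p i 0 * p (nxt i) 1 - p i 1 * p (nxt i) 0) z =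
   W i 0 * z (nxt i) 1 + z i 0 * W (nxt i) 1 - (W i 1 * z (nxt i) 0 + z i 1 * W (nxt i) 0).
  move=> i.
  have h1 := DM (Dcoord z W i 0).1 (Dcoord z W (nxt i) 1).1.
  have h2 := DM (Dcoord z W i 1).1 (Dcoord z W (nxt i) 0).1.
  have h3 := DB h1.1 h2.1.
  split; first exact: h3.1.
  by rewrite h3.2 h1.2 h2.2 !(Dcoord z W _ _).2.
have -> : (@area R n) = \sum_i (fun p : ngon => p i 0 * p (nxt i) 1 - p i 1 * p (nxt i) 0).
  apply/funext => p; rewrite fct_sumE /area; apply: eq_bigr => i _.
  by rewrite /det2 /vtx !mxE.
rewrite derive_sum; last by move=> i; exact: (hterm i).1.
rewrite /Lb; apply: eq_bigr => i _; rewrite (hterm i).2 /det2 /vtx !mxE; ring.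
Qed.

Lemma Dzero k i (z x : ngon) : theta i z ('D_x (Xf k) z) = - theta i x (Xf k z).
Proof.
have d := DT _ _ _ i (diff_derivable (v := x) (pfield_diff (pfield_Xf k) z)).
have e : (fun p => theta i p (Xf k p)) = cst 0 by apply/funext => p; exact: XfF.
have := d.2; rewrite e derive_cst => h.
by apply/eqP; rewrite -addr_eq0 addrC -h.
Qed.

Lemma thetaB j i (z : ngon) : theta i z (lie (Xf j) (Xf (nxt j)) z) =
  2 * sj z j * ((i == j)%:R - (i == nxt j)%:R).
Proof. by rewrite /lie theta_sub !Dzero -swapX opprK. Qed.

Lemma F_Xf c (z : ngon) j : F_field c z (Xf j).
Proof.
exists setT; split => //; first exact: openT.
  exact: pfield_smooth (pfield_Xf j).
by move=> y _ _; exact: XfF.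
Qed.

Lemma main_lemma c (z : ngon) : c != 0 -> Mhyp c z ->
  forall W, in_span (gen_set c z) W <-> tangentM z W.
Proof.
move=> hc hM W; rewrite /tangentM /= DA; split.
  case=> k [a [v [hv ->]]]; rewrite Lb_lin big1 // => j _.
  case: (hv j) => [[X [hX ->]]|[X [Y [hX hY ->]]]].
    by rewrite (FF_tangent hM hX) mulr0.
  by rewrite (bracket_tangent hc hM hX hY) mulr0.
move=> hW.
have nd : forall k, al z k != 0.
  by move=> k; rewrite -alE; case: hM => [[_ hD] _]; exact: hD k.
have hsum : \sum_i theta i z W = 0 by rewrite sum_theta.
have sn : forall j, sj z j != 0.
  move=> j; rewrite /sj.
  have -> : ed z (nxt j) 0 * ed z j 1 - ed z (nxt j) 1 * ed z j 0 = - al z j.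
    by rewrite /al; ring.
  by rewrite mulrN oppr_eq0 !mulf_neq0.
have [b hb] := solve_b sn hsum.
pose B j := lie (Xf j) (Xf (nxt j)) z.
pose W' := W - \sum_j b j *: B j.
have hW' : forall i, theta i z W' = 0.
  move=> i; rewrite /W' theta_sub theta_lin.
  under eq_bigr => j _ do rewrite /B thetaB.
  by rewrite hb subrr.
have eW' := kernel nd hW'.
exists (n + n)%N.
exists (fun j : 'I_(n + n) => match @fintype.split n n j with inl j' => cf z W' j' | inr j' => b j' end).
exists (fun j : 'I_(n + n) => match @fintype.split n n j with inl j' => Xf j' z | inr j' => B j' end).
split.
  move=> j; case: (@fintype.split n n j) => j'.
    by left; exists (Xf j'); split => //; exact: F_Xf.
  by right; exists (Xf j'), (Xf (nxt j')); split => //; exact: F_Xf.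
rewrite big_split_ord /=.
have sl : forall j : 'I_n, @fintype.split n n (lshift n j) = inl j := fun j => unsplitK (inl j).
have sr : forall j : 'I_n, @fintype.split n n (rshift n j) = inr j := fun j => unsplitK (inr j).
under eq_bigr => j _ do rewrite sl.
under [X in _ + X]eq_bigr => j _ do rewrite sr.
by rewrite -eW' /W' subrK.
Qed.

End Alg.

Theorem theorem2p5 (R : realType) (n : nat) (c : R) (z : ngon R n) :
  (3 <= n)%N -> c != 0 -> Mhyp c z ->
  (forall W, in_span (gen_set c z) W <-> tangentM z W).
Proof. by move=> n3; exact: (@main_lemma R n n3 c z). Qed.
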